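(* Let $M,N$ be weights of $\mathbb{R}^m,\mathbb{R}^n$, let $A\in\mathbb{R}^{m\times n}$ with $MA=AN$, and let $K\subseteq\mathbb{R}^n$ be a closed cone with $A^{[\dagger]}\circ A\circ K\subseteq K$. Then the cone $(A\circ I\circ K)^{[*]}\cap\mathcal{R}(A\circ I)$ is acute if and only if $$(A\circ I\circ K)^{[*]}\cap\mathcal{R}(A\circ I)\subseteq A\circ I\circ K.$$
   Context: A weight is a real symmetric matrix $W$ with $W^2=I$. $\mathbb{R}^m$ and $\mathbb{R}^n$ carry weights $M\in\mathbb{R}^{m\times m}$ and $N\in\mathbb{R}^{n\times n}$, respectively. The indefinite inner product on the space with weight $W$ is $[x,y]=\langle x,Wy\rangle$. Indefinite matrix product: if $B$ has $p$ columns and $C$ has $p$ rows (or is a vector in $\mathbb{R}^p$), $p\in\{m,n\}$, and $W$ is the weight of $\mathbb{R}^p$, then $B\circ C:=BWC$. $I$ denotes an identity matrix of the appropriate size. Indefinite adjoint of $B\in\mathbb{R}^{p\times q}$: $B^{[*]}:=W_qB^TW_p$, where $W_p,W_q$ are the weights of $\mathbb{R}^p,\mathbb{R}^q$. Indefinite Moore–Penrose inverse: $A^{[\dagger]}$ is the unique $X\in\mathbb{R}^{n\times m}$ such that - $A\circ X\circ A=A$, - $X\circ A\circ X=X$, - $(A\circ X)^{[*]}=A\circ X$, - $(X\circ A)^{[*]}=X\circ A$. It equals $NA^\dagger M$. Range and null space: for a matrix $B$ with $q$ columns, $\mathcal{R}(B)=\{B\circ x:x\in\mathbb{R}^q\}$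 and $\mathcal{N}(B)=\{x\in\mathbb{R}^q:B\circ x=0\}$. A cone is a nonempty set closed under addition and under multiplication by nonnegative scalars. For $S$ a subset of $\mathbb{R}^p$ with weight $W$, the dual is $S^{[*]}=\{x\in\mathbb{R}^p:[x,t]\ge0\ \forall t\in S\}$. For a matrix $B$ and a set $S$, $B\circ S=\{B\circ s:s\in S\}$. A cone $C$ is acute if $[x,y]\ge0$ for all $x,y\in C$, equivalently $C\subseteq C^{[*]}$. *)

(* Defs.v *)
From Stdlib Require Import Reals.
From mathcomp Require Import ssreflect ssrfun ssrbool eqtype ssrnat seq fintype bigop.
Set Implicit Arguments. Unset Strict Implicit. Unset Printing Implicit Defensive.
Local Open Scope R_scope.

Definition vec (n : nat) := 'I_n -> R.
Definition mat (m n : nat) := 'I_m -> 'I_n -> R.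

Definition rsum (n : nat) (F : 'I_n -> R) : R := \big[Rplus/R0]_(i < n) F i.

Definition mmul (m p q : nat) (B : mat m p) (C : mat p q) : mat m q :=
  fun i j => rsum (fun k => B i k * C k j).
Definition mvmul (m p : nat) (B : mat m p) (x : vec p) : vec m :=
  fun i => rsum (fun k => B i k * x k).
Definition trmat (m n : nat) (B : mat m n) : mat n m := fun j i => B i j.
Definition idmat (n : nat) : mat n n :=
  fun i j => if i == j then 1 else 0.
Arguments idmat n : clear implicits.
Definition dot (n : nat) (x y : vec n) : R := rsum (fun i => x i * y i).

Definition weight (n : nat) (W : mat n n) : Prop :=
  trmat W = W /\ mmul W W = idmat n.

Definition iip (n : nat) (W : mat n n) (x y : vec n) : R := dot x (mvmul W y).

(* indefinite products B o C := B W C, W the weight of the inner space R^p *)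
Definition imul (m p q : nat) (W : mat p p) (B : mat m p) (C : mat p q) : mat m q :=
  mmul (mmul B W) C.
Definition imulv (m p : nat) (W : mat p p) (B : mat m p) (x : vec p) : vec m :=
  mvmul (mmul B W) x.

Definition iadj (p q : nat) (Wp : mat p p) (Wq : mat q q) (B : mat p q) : mat q p :=
  mmul (mmul Wq (trmat B)) Wp.

(* X is the indefinite Moore-Penrose inverse of A (A in R^{m x n},
   weights M of R^m and N of R^n) : the four Penrose-type equations. *)
Definition is_imp (m n : nat) (M : mat m m) (N : mat n n) (A : mat m n) (X : mat n m) : Prop :=
  [/\ imul M (imul N A X) A = A,
      imul N (imul M X A) X = X,
      iadj M M (imul N A X) = imul N A X
    & iadj N N (imul M X A) = imul M X A].

Definition vset (p : nat) := vec p -> Prop.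

Definition is_cone (p : nat) (S : vset p) : Prop :=
  (exists x, S x) /\
  (forall x y, S x -> S y -> S (fun i => x i + y i)) /\
  (forall a x, 0 <= a -> S x -> S (fun i => a * x i)).

(* closed in the Euclidean topology of R^p (written with the equivalent
   max-norm balls): every point all of whose neighbourhoods meet S is in S *)
Definition is_closed (p : nat) (S : vset p) : Prop :=
  forall x, (forall eps, 0 < eps -> exists y, S y /\ forall i, Rabs (x i - y i) < eps) ->
            S x.

Definition idual (p : nat) (W : mat p p) (S : vset p) : vset p :=
  fun x => forall t, S t -> 0 <= iip W x t.

Definition iimage (p q : nat) (W : mat q q) (B : mat p q) (S : vset q) : vset p :=
  fun y => exists s, S s /\ y = imulv W B s.

Definition irange (p q : nat) (W : mat q q) (B : mat p q) : vset p :=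
  fun y => exists x, y = imulv W B x.

Definition vinter (p : nat) (S T : vset p) : vset p := fun x => S x /\ T x.
Definition vsubset (p : nat) (S T : vset p) : Prop := forall x, S x -> T x.

Definition acute (p : nat) (W : mat p p) (C : vset p) : Prop :=
  forall x y, C x -> C y -> 0 <= iip W x y.

(* Main.v *)
Require Import Defs.
From HB Require Import structures.
From Stdlib Require Import Reals Lra Lia Psatz FunctionalExtensionality.
From mathcomp Require Import ssreflect ssrfun ssrbool eqtype ssrnat seq fintype bigop.
Local Open Scope R_scope.
Set Implicit Arguments. Unset Strict Implicit.

HB.instance Definition _ := Monoid.isComLaw.Build R R0 Rplus (fun x y z => esym (Rplus_assoc x y z)) Rplus_comm Rplus_0_l.

Lemma rsum_ext n (F G : 'I_n -> R) : (forall i, F i = G i) -> rsum F = rsum G.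
Proof. by move=> H; rewrite /rsum; apply: eq_bigr => i _. Qed.

Lemma rsum_add n (F G : 'I_n -> R) : rsum (fun i => F i + G i) = rsum F + rsum G.
Proof. by rewrite /rsum big_split. Qed.

Lemma rsum_scal n c (F : 'I_n -> R) : rsum (fun i => c * F i) = c * rsum F.
Proof.
rewrite /rsum; symmetry; apply: (big_morph (fun x => c * x)).
  by move=> x y /=; ring. by ring.
Qed.

Lemma rsum_swap n m (F : 'I_n -> 'I_m -> R) :
  rsum (fun i => rsum (fun j => F i j)) = rsum (fun j => rsum (fun i => F i j)).
Proof. by rewrite /rsum exchange_big. Qed.
Lemma rsum_delta n (i : 'I_n) (x : 'I_n -> R) :
  rsum (fun k => (if i == k then 1 else 0) * x k) = x i.
Proof.
rewrite /rsum (bigD1 i) //= eqxx big1 /=; first ring.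
by move=> k /negbTE; rewrite eq_sym => ->; ring.
Qed.

Lemma rsum_delta' n (i : 'I_n) (x : 'I_n -> R) :
  rsum (fun k => x k * (if k == i then 1 else 0)) = x i.
Proof.
rewrite -(rsum_delta i x); apply: rsum_ext => k; rewrite eq_sym; ring.
Qed.

Lemma mmulA a b c d (B : mat a b) (C : mat b c) (D : mat c d) :
  mmul (mmul B C) D = mmul B (mmul C D).
Proof.
apply: functional_extensionality => i; apply: functional_extensionality => j.
rewrite /mmul.
transitivity (rsum (fun k => rsum (fun l => B i l * C l k * D k j))).
  apply: rsum_ext => k; rewrite Rmult_comm -rsum_scal; apply: rsum_ext => l; ring.
rewrite rsum_swap; apply: rsum_ext => l; rewrite -rsum_scal; apply: rsum_ext => k; ring.
Qed.

Lemma mvmul_mmul a b c (B : mat a b) (C : mat b c) (v : vec c) :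
  mvmul (mmul B C) v = mvmul B (mvmul C v).
Proof.
apply: functional_extensionality => i; rewrite /mvmul /mmul.
transitivity (rsum (fun k => rsum (fun l => B i l * C l k * v k))).
  apply: rsum_ext => k; rewrite Rmult_comm -rsum_scal; apply: rsum_ext => l; ring.
rewrite rsum_swap; apply: rsum_ext => l; rewrite -rsum_scal; apply: rsum_ext => k; ring.
Qed.

Lemma trmat_mmul a b c (B : mat a b) (C : mat b c) :
  trmat (mmul B C) = mmul (trmat C) (trmat B).
Proof.
apply: functional_extensionality => i; apply: functional_extensionality => j.
rewrite /trmat /mmul; apply: rsum_ext => k; ring.
Qed.

Lemma trmatK a b (B : mat a b) : trmat (trmat B) = B.
Proof. by []. Qed.

Lemma mmul1l a b (B : mat a b) : mmul (idmat a) B = B.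
Proof.
apply: functional_extensionality => i; apply: functional_extensionality => j.
by rewrite /mmul /idmat rsum_delta.
Qed.

Lemma mmul1r a b (B : mat a b) : mmul B (idmat b) = B.
Proof.
apply: functional_extensionality => i; apply: functional_extensionality => j.
rewrite /mmul /idmat -(rsum_delta' j (B i)); apply: rsum_ext => k.
by rewrite eq_sym.
Qed.

Lemma mvmul1 a (v : vec a) : mvmul (idmat a) v = v.
Proof. apply: functional_extensionality => i; by rewrite /mvmul /idmat rsum_delta. Qed.

Lemma dot_sym n (x y : vec n) : dot x y = dot y x.
Proof. rewrite /dot; apply: rsum_ext => i; ring. Qed.

Lemma dot_mvmul a b (B : mat a b) (x : vec a) (y : vec b) :
  dot x (mvmul B y) = dot (mvmul (trmat B) x) y.
Proof.
rewrite /dot /mvmul /trmat.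
transitivity (rsum (fun i => rsum (fun k => x i * B i k * y k))).
  apply: rsum_ext => i; rewrite -rsum_scal; apply: rsum_ext => k; ring.
rewrite rsum_swap; apply: rsum_ext => k; rewrite Rmult_comm -rsum_scal; apply: rsum_ext => l; ring.
Qed.
From Stdlib Require Import ClassicalEpsilon Classical.
Ltac lra_ := intros; lra.
Ltac nra_ := intros; nra.

Lemma rsum_lin2 n a b (F G : 'I_n -> R) :
  rsum (fun i => a * F i + b * G i) = a * rsum F + b * rsum G.
Proof. by rewrite rsum_add !rsum_scal. Qed.

Lemma rsum_ge0 n (F : 'I_n -> R) : (forall i, 0 <= F i) -> 0 <= rsum F.
Proof.
move=> H; rewrite /rsum; apply: (big_ind (fun x => 0 <= x)) => //.
  by apply: Rle_refl.
by move=> x y; lra_.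
Qed.

Lemma rsum_ge_term n (F : 'I_n -> R) j : (forall i, 0 <= F i) -> F j <= rsum F.
Proof.
move=> H; rewrite /rsum (bigD1 j) //=.
rewrite -{1}(Rplus_0_r (F j)); apply: Rplus_le_compat_l.
apply: (big_ind (fun x => 0 <= x)) => //; first by apply: Rle_refl.
by move=> x y; lra_.
Qed.

Definition nsq n (v : vec n) := dot v v.

Lemma coord_le_nsq n (v : vec n) c : v c * v c <= nsq v.
Proof. apply: (@rsum_ge_term n (fun i => v i * v i)) => i; nra_. Qed.

Lemma nsq_ge0 n (v : vec n) : 0 <= nsq v.
Proof. apply: rsum_ge0 => i; nra_. Qed.

Lemma quad n (x a b : vec n) t : (forall c, x c = a c + t * b c) ->
  nsq x = nsq a + 2 * t * dot a b + t * t * nsq b.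
Proof.
move=> H; rewrite /nsq /dot.
transitivity (rsum (fun i => 1 * (a i * a i) + 1 * ((2 * t) * (a i * b i) + (t * t) * (b i * b i)))).
  by apply: rsum_ext => i; rewrite H; ring.
rewrite rsum_lin2 rsum_lin2; ring.
Qed.

Lemma abs_lt_of_sq x e : 0 < e -> x * x < e * e -> Rabs x < e.
Proof.
move=> he hx; rewrite /Rabs; case: Rcase_abs => _; nra_.
Qed.

Lemma arch_inv eps : 0 < eps -> exists N : nat, forall j, le N j -> / INR (S j) < eps.
Proof.
move=> he; case: (archimed_cor1 eps he) => N [h1 h2]; exists N => j hj.
apply: Rle_lt_trans h1; apply: Rinv_le_contravar; first by apply: lt_0_INR.
apply: le_INR; lia.
Qed.

Lemma cv_const c : Un_cv (fun _ : nat => c) c.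
Proof. move=> eps he; exists 0%nat => j _; rewrite /R_dist Rminus_diag Rabs_R0; lra_. Qed.

Lemma cv_rsum n (F : nat -> 'I_n -> R) (L : 'I_n -> R) :
  (forall i, Un_cv (fun j => F j i) (L i)) -> Un_cv (fun j => rsum (F j)) (rsum L).
Proof.
elim: n F L => [|n IH] F L H.
  rewrite /rsum big_ord0; apply: (Un_cv_ext (fun _ => 0)); last by apply: cv_const.
  by move=> j; rewrite big_ord0.
rewrite /rsum big_ord_recr /=.
apply: (Un_cv_ext (fun j => rsum (fun i : 'I_n => F j (widen_ord (leqnSn n) i)) + F j ord_max)).
  by move=> j; rewrite /rsum big_ord_recr.
apply: CV_plus; last by apply: H.
by apply: (IH (fun j i => F j (widen_ord (leqnSn n) i)) (fun i => L (widen_ord (leqnSn n) i))).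
Qed.

Definition dist2 n (z k : vec n) := nsq (fun i => z i - k i).

Lemma separation n (K : vset n) (z : vec n) :
  is_cone K -> is_closed K -> ~ K z ->
  exists w, (forall k, K k -> 0 <= dot w k) /\ dot w z < 0.
Proof.
move=> [[k0 Hk0] [Kadd Kscal]] Kcl Knz.
set E := fun r => exists k, K k /\ r = - dist2 z k.
have Eb : bound E.
  exists 0 => r [k [_ ->]]; have := nsq_ge0 (fun i => z i - k i); rewrite /dist2; lra_.
have Ene : exists r, E r by exists (- dist2 z k0); exists k0.
case: (completeness E Eb Ene) => l [lub1 lub2].
set d := - l.
have D1 : forall k, K k -> d <= dist2 z k.
  move=> k Hk; have : - dist2 z k <= l by apply: lub1; exists k.
  rewrite /d; lra_.
have D2 : forall eps, 0 < eps -> exists k, K k /\ dist2 z k < d + eps.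
  move=> eps he; apply: NNPP => Hn.
  have : l <= l - eps.
    apply: lub2 => r [k [Hk ->]].
    have : ~ (dist2 z k < d + eps) by move=> h; apply: Hn; exists k.
    rewrite /d; lra_.
  lra_.
have Hseq : forall j : nat, exists k, K k /\ dist2 z k < d + / INR (S j).
  move=> j; apply: D2; apply: Rinv_0_lt_compat; apply: lt_0_INR; lia.
set ks := fun j => proj1_sig (constructive_indefinite_description _ (Hseq j)).
have Hks : forall j, K (ks j) /\ dist2 z (ks j) < d + / INR (S j).
  by move=> j; rewrite /ks; case: (constructive_indefinite_description _ _).
have epos : forall j : nat, 0 < / INR (S j).
  move=> j; apply: Rinv_0_lt_compat; apply: lt_0_INR; lia.
have Cb : forall i j c, (ks i c - ks j c) * (ks i c - ks j c) <= 2 * / INR (S i) + 2 * / INR (S j).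
  move=> i j c.
  have [Ki Hi] := Hks i; have [Kj Hj] := Hks j.
  have Km : K (fun c => / 2 * (ks i c + ks j c)).
    apply: (Kscal (/2) (fun c => ks i c + ks j c)); first lra_.
    by apply: Kadd.
  have Dm := D1 _ Km.
  have Id : nsq (fun c => ks i c - ks j c) =
      2 * dist2 z (ks i) + 2 * dist2 z (ks j) - 4 * dist2 z (fun c => / 2 * (ks i c + ks j c)).
    rewrite /dist2 /nsq /dot.
    have -> : forall a b c : R, a + b - c = a + b + (-1) * c by move=> *; ring.
    rewrite -!rsum_scal -!rsum_add; apply: rsum_ext => c'; field.
  have H0 := coord_le_nsq (fun c => ks i c - ks j c) c; cbv beta in H0; rewrite Id in H0; lra_.
have Cc : forall c, Cauchy_crit (fun j => ks j c).
  move=> c eps he.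
  have he2 : 0 < eps * eps / 4 by nra_.
  case: (arch_inv he2) => N HN; exists N => i j hi hj.
  rewrite /R_dist; apply: abs_lt_of_sq => //.
  have := Cb i j c; have := HN i hi; have := HN j hj; lra_.
set p := fun c => proj1_sig (R_complete _ (Cc c)).
have Hp : forall c, Un_cv (fun j => ks j c) (p c).
  by move=> c; rewrite /p; case: (R_complete _ _).
have Cv0 : Un_cv (fun j => nsq (fun c => p c - ks j c)) 0.
  have lim0 : rsum (fun c => (p c - p c) * (p c - p c)) = 0.
    by rewrite /rsum big1 // => c _; ring.
  have := @cv_rsum n (fun j c => (p c - ks j c) * (p c - ks j c)) (fun c => (p c - p c) * (p c - p c)).
  rewrite lim0; apply => c.
  by apply: CV_mult; apply: CV_minus => //; apply: cv_const.
have Kp : K p.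
  apply: Kcl => eps he.
  have he2 : 0 < eps * eps by nra_.
  case: (Cv0 _ he2) => N HN.
  exists (ks N); split; first by case: (Hks N).
  move=> c; apply: abs_lt_of_sq => //.
  have := HN N (le_n N); rewrite /R_dist Rminus_0_r.
  have := coord_le_nsq (fun c => p c - ks N c) c.
  have := nsq_ge0 (fun c => p c - ks N c).
  rewrite Rabs_right; [lra_|apply: Rle_ge; apply: nsq_ge0].
have Fp : dist2 z p = d.
  apply: (UL_sequence (fun j => dist2 z (ks j))).
    have := @cv_rsum n (fun j c => (z c - ks j c) * (z c - ks j c)) (fun c => (z c - p c) * (z c - p c)).
    rewrite /dist2 /nsq /dot; apply => c.
    by apply: CV_mult; apply: CV_minus => //; apply: cv_const.
  move=> eps he; case: (arch_inv he) => N HN; exists N => j hj.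
  have := HN j hj; have [Kj Hj] := Hks j; have := D1 _ Kj.
  rewrite /R_dist => h1 h2; rewrite Rabs_right; lra_.
set a := fun c => z c - p c.
exists (fun c => p c - z c); split.
  move=> k Kk.
  apply: Rnot_lt_le => Hneg.
  set s := dot a k.
  have hs : s = - dot (fun c => p c - z c) k.
    rewrite /s /dot; apply: (Rplus_eq_reg_r (rsum (fun c => (p c - z c) * k c))).
    rewrite -rsum_add Rplus_opp_l /rsum big1 // => c _; rewrite /a; ring.
  set q := nsq k.
  have hq : 0 <= q by apply: nsq_ge0.
  have sp : 0 < s by lra_.
  set t := s / (q + 1).
  have tp : 0 < t by rewrite /t; apply: Rdiv_lt_0_compat; lra_.
  have Kt : K (fun c => p c + t * k c).
    by apply: (Kadd p (fun c => t * k c)) => //; apply: Kscal => //; lra_.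
  have := D1 _ Kt.
  rewrite /dist2 (quad (a := a) (b := k) (t := - t)); last by move=> c; rewrite /a; ring.
  have -> : nsq a = d by rewrite -Fp.
  rewrite -/s -/q => h.
  have h2 : t * (t * q - 2 * s) >= 0 by nra_.
  have h3 : t * q - 2 * s >= 0.
    case: (Rle_lt_dec 0 (t * q - 2 * s)) => //; first lra_.
    move=> hlt; nra_.
  have : t * q < s.
    rewrite /t; apply: (Rmult_lt_reg_r (q + 1)); first lra_.
    field_simplify; [nra_ | lra_].
  lra_.
set D := nsq a.
have HD : D = d by rewrite /D -Fp.
have Dpos : 0 < D.
  case: (Rle_lt_or_eq_dec 0 D (nsq_ge0 a)) => // h0.
  exfalso; apply: Knz.
  have -> : z = p.
    apply: functional_extensionality => c.
    have := coord_le_nsq a c; rewrite -/D -h0 /a => hc.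
    nra_.
  by [].
set P := nsq p.
have hP : 0 <= P by apply: nsq_ge0.
set del := D / (D + P + 1).
have del1 : 0 < del by rewrite /del; apply: Rdiv_lt_0_compat; lra_.
have del2 : del < 1.
  rewrite /del; apply: (Rmult_lt_reg_r (D + P + 1)); first lra_.
  field_simplify; lra_.
have del3 : del * P < D.
  rewrite /del; apply: (Rmult_lt_reg_r (D + P + 1)); first lra_.
  field_simplify; [nra_ | lra_].
have Kt : K (fun c => (1 - del) * p c) by apply: Kscal => //; lra_.
have := D1 _ Kt.
rewrite /dist2 (quad (a := a) (b := p) (t := del)); last by move=> c; rewrite /a; ring.
rewrite -/D -/P -HD => h.
have h2 : 2 * dot a p + del * P >= 0.
  case: (Rle_lt_dec 0 (2 * dot a p + del * P)) => //; first lra_.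
  move=> hlt; nra_.
have Ez : dot (fun c => p c - z c) z = - dot a p - D.
  rewrite /D /nsq /dot.
  have -> : forall x y : R, - x - y = (-1) * x + (-1) * y by move=> *; ring.
  rewrite -rsum_lin2; apply: rsum_ext => c; rewrite /a; ring.
rewrite Ez; lra_.
Qed.

Unset Implicit Arguments. Unset Strict Implicit.

Theorem lemma3p10 (m n : nat) (M : mat m m) (N : mat n n) (A : mat m n)
  (Adag : mat n m) (K : vset n) :
  weight M -> weight N ->
  mmul M A = mmul A N ->
  is_imp M N A Adag ->
  is_cone K -> is_closed K ->
  vsubset (iimage N (imul M Adag A) K) K ->
  acute M (vinter (idual M (iimage N (imul N A (idmat n)) K))
                  (irange N (imul N A (idmat n))))
  <->
  vsubset (vinter (idual M (iimage N (imul N A (idmat n)) K))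
                  (irange N (imul N A (idmat n))))
          (iimage N (imul N A (idmat n)) K).
Proof.
move=> [tM MM] [tN NN] hMA [e1 e2 e3 e4] Kc Kcl hsub.
set X := Adag in e1 e2 e3 e4 hsub *.
have FB : forall v, imulv N (imul N A (idmat n)) v = mvmul A v.
  move=> v; rewrite /imulv /imul mmul1r mmulA NN mmul1r //.
have FP : forall k, imulv N (imul M X A) k = mvmul X (mvmul A k).
  move=> k; rewrite /imulv /imul !mmulA -(mmulA M A N) hMA mmulA NN mmul1r.
  by rewrite mvmul_mmul.
have G : mmul A (mmul X (mmul M A)) = mmul M A.
  move: e1; rewrite /imul !mmulA => e1.
  rewrite -{3}e1 -(mmulA M A) hMA mmulA -(mmulA N N) NN mmul1l //.
have H : mmul A (mmul X A) = A.
  rewrite -{2}(mmul1l A) -MM mmulA hMA -(mmulA M A N) -(mmulA X) -(mmulA A) G.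
  by rewrite hMA mmulA NN mmul1r.
have U : mmul M (trmat X) = mmul A (mmul N (mmul X (trmat X))).
  have e2' : trmat X = mmul (trmat X) (mmul N (mmul (trmat A) (mmul M (trmat X)))).
    move: e2; rewrite /imul => e2.
    by rewrite -{1}e2 !trmat_mmul tN tM ?mmulA.
  have e3' : mmul M (mmul (trmat X) (mmul N (mmul (trmat A) M))) = mmul A (mmul N X).
    move: e3; rewrite /iadj /imul !trmat_mmul tN !mmulA //.
  rewrite {1}e2' -!mmulA.
  have -> : mmul (mmul (mmul (mmul M (trmat X)) N) (trmat A)) M = mmul A (mmul N X).
    by rewrite -e3' !mmulA.
  by rewrite !mmulA.
have MMv : forall v, mvmul M (mvmul M v) = v.
  by move=> v; rewrite -mvmul_mmul MM mvmul1.
split.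
  move=> Hac x [Hdual [w1 Hx0]].
  have Hx := Hx0; rewrite FB in Hx.
  set z := mvmul X x.
  case: (classic (K z)) => Kz.
    exists z; split => //; rewrite FB /z Hx -!mvmul_mmul mmulA H //.
  case: (separation Kc Kcl Kz) => w [Hw Hwz].
  set u := mvmul M (mvmul (trmat X) w).
  have Du : vinter (idual M (iimage N (imul N A (idmat n)) K))
                  (irange N (imul N A (idmat n))) u.
    split.
      move=> t [k [Kk ->]]; rewrite /iip FB /u dot_mvmul tM MMv.
      rewrite dot_sym dot_mvmul trmatK dot_sym -FP.
      by apply: Hw; apply: hsub; exists k.
    exists (mvmul N (mvmul X (mvmul (trmat X) w))).
    by rewrite FB /u -!mvmul_mmul U ?mmulA.
  have := Hac x u (conj Hdual (ex_intro _ w1 Hx0)) Du.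
  rewrite /iip /u MMv dot_mvmul trmatK -/z dot_sym => h.
  lra.
move=> Hsub x y Dx Dy.
case: (Hsub y Dy) => k [Kk Hy].
case: Dx => Hd _.
by apply: Hd; exists k.
Qed.
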